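(* Let $X$ be a topological space, $\sigma$ a winning strategy for Player I in the open-open game on $X$, and $\mathcal P$ a family of non-empty open subsets of $X$ closed under $\sigma$. Then for every non-empty open set $V\subseteq X$ there exists $W\in\mathcal P$ such that every $U\in\mathcal P$ with $U\subseteq W$ satisfies $U\cap V\neq\emptyset$.
   Context: Open-open game on $X$: at inning $n$ Player I chooses a non-empty open $A_n\subseteq X$, then Player II chooses a non-empty open $B_n\subseteq A_n$; Player I wins if $\bigcup_nB_n$ is dense in $X$. A strategy for Player I is a function $\sigma$ assigning a non-empty open set to each finite (possibly empty) sequence of non-empty open sets; it is winning if Player I wins every play in which $A_0=\sigma(\emptyset)$ and $A_{n+1}=\sigma(B_0,\dots,B_n)$. $\mathcal P$ is closed under $\sigma$ if $\sigma(\emptyset)\in\mathcal P$ and $\sigma(B_0,\dots,B_n)\in\mathcal P$ whenever $B_0,\dots,B_n\in\mathcal P$. *)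

(* Defs.v *)
From mathcomp Require Import all_boot all_order all_algebra.
From mathcomp Require Import all_classical all_reals all_analysis.
Set Implicit Arguments. Unset Strict Implicit. Unset Printing Implicit Defensive.
Local Open Scope classical_set_scope.

Definition neopen (X : topologicalType) (A : set X) : Prop := open A /\ A !=set0.

Fixpoint all_in (T : Type) (P : set T) (l : seq T) : Prop :=
  if l is x :: l' then P x /\ all_in P l' else True.

Definition strategy (X : topologicalType) := seq (set X) -> set X.

Definition prefix (X : topologicalType) (B : nat -> set X) (n : nat) : seq (set X) :=
  [seq B i | i <- iota 0 n].

(* B is a play of Player II against s: A_n = s (B_0,...,B_{n-1}), B_n ⊆ A_n *)
Definition play_against (X : topologicalType) (s : strategy X) (B : nat -> set X) : Prop :=
  forall n, neopen (B n) /\ B n `<=` s (prefix B n).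

Definition is_strategy (X : topologicalType) (s : strategy X) : Prop :=
  forall bs : seq (set X), all_in (@neopen X) bs -> neopen (s bs).

Definition winning_strategy (X : topologicalType) (s : strategy X) : Prop :=
  is_strategy s /\
  forall B : nat -> set X, play_against s B -> dense (\bigcup_n B n).


Definition closed_under (X : topologicalType) (P : set (set X)) (s : strategy X) : Prop :=
  P (s [::]) /\ forall bs : seq (set X), bs <> [::] -> all_in P bs -> P (s bs).

(* Main.v *)
Require Import Defs.
From mathcomp Require Import all_boot all_order all_algebra.
From mathcomp Require Import all_classical all_reals all_analysis.
Local Open Scope classical_set_scope.

Lemma all_in_rcons (T : Type) (Q : set T) (l : seq T) x :
  all_in Q l -> Q x -> all_in Q (rcons l x).
Proof. by elim: l => [|y l IH] /= => [_ Qx|[Qy Hl] Qx]; split => //; apply: IH. Qed.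

Theorem lemma6 (X : topologicalType) (s : strategy X) (P : set (set X)) :
  winning_strategy s ->
  (forall A, P A -> neopen A) ->
  closed_under P s ->
  forall V : set X, neopen V ->
  exists W, P W /\ forall U, P U -> U `<=` W -> U `&` V !=set0.
Proof.
move=> [_ win] PA [P0 PS] V [oV nV].
apply: contrapT => hno.
have H : forall W, exists U, P W -> P U /\ U `<=` W /\ ~ (U `&` V !=set0).
  move=> W; case: (pselect (P W)) => PW; last by exists W.
  have : ~ (forall U, P U -> U `<=` W -> U `&` V !=set0).
    by move=> h; apply: hno; exists W.
  move=> /existsNP [U /not_implyP [PU /not_implyP [UW nUV]]].
  by exists U.
have [f hf] := choice H.
pose L := fix L n := if n is n'.+1 then rcons (L n') (f (s (L n'))) else [::].
pose B n := f (s (L n)).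
have LP : forall n, all_in P (L n).
  elim => [//|n IH] /=; apply: all_in_rcons => //.
  have Ps : P (s (L n)).
    case: n IH => [|n] IH; first exact: P0.
    by apply: PS => //=; case: (L n) => //.
  by have [] := hf _ Ps.
have Ps : forall n, P (s (L n)).
  case=> [|n]; first exact: P0.
  by apply: PS; [rewrite /=; case: (L n) | exact: LP].
have pre : forall n, Defs.prefix B n = L n.
  elim => [//|n IH]; move: IH; rewrite /Defs.prefix -addn1 iotaD map_cat /= => ->.
  by rewrite addn1 add0n cats1.
have play : play_against s B.
  move=> n; have [PB [BW _]] := hf _ (Ps n).
  split; first exact: PA.
  move: BW; rewrite pre; exact.
have [x [Vx [n _ Bx]]] := win B play V nV oV.
have [_ [_ nBV]] := hf _ (Ps n).
by apply: nBV; exists x.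
Qed.
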